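(* Let $q\ge2$ be a prime power, $d\ge6$ and $j=1$. Then $|Q_1(i)|>|Q_1(i+1)|$ for all $1\le i\le d-1$. Moreover, for every $1\le i\le d$, $Q_1(i)$ has the same sign as $T_{h_{\max}}(i,1)$, where $h_{\max}=\min\{1,d-i\}$.
   Context: Let $b=-q$. For integers $m\ge0$ and $l$, ${m\brack l}_b=\prod_{t=1}^{l}\frac{b^{m-t+1}-1}{b^t-1}$ for $l\ge0$ and $0$ for $l<0$. For $0\le i,j\le d$, $$Q_j(i)=\sum_{h=0}^{\min\{j,d-i\}}(-1)^j(-q)^{\binom{j-h}{2}+hd}{d-h\brack d-j}_b{d-i\brack h}_b,$$ the eigenvalues of the Hermitian forms graph $Q_q(d,j)$ (vertices: $d\times d$ Hermitian matrices over $\mathbb F_{q^2}$, adjacent iff their difference has rank $j$). $T_h(i,j)$ denotes the $h$-th summand (including the factor $(-1)^j$), for $0\le h\le\min\{j,d-i\}$. *)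

(* Defs.v *)
From mathcomp Require Import all_boot all_order all_algebra.
Set Implicit Arguments. Unset Strict Implicit. Unset Printing Implicit Defensive.
Import Order.TTheory GRing.Theory Num.Theory.
Local Open Scope ring_scope.

Definition gbin (b : rat) (m l : nat) : rat :=
  \prod_(1 <= t < l.+1) ((b ^+ (m - t + 1)%N - 1) / (b ^+ t - 1)).

Definition prime_power (q : nat) : Prop :=
  exists p k : nat, [/\ prime p, (0 < k)%N & q = (p ^ k)%N].

(* h-th summand T_h(i,j) of Q_j(i) for the Hermitian forms graph, b = -q *)
Definition Tterm (q d : nat) (h i j : nat) : rat :=
  let b : rat := - (q%:R) in
  (-1) ^+ j * b ^+ ('C(j - h, 2) + h * d)%N
    * gbin b (d - h) (d - j) * gbin b (d - i) h.

Definition Qeig (q d : nat) (j i : nat) : rat :=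
  \sum_(0 <= h < (minn j (d - i)).+1) Tterm q d h i j.

(* Main.v *)
Require Import Defs.
From mathcomp Require Import all_boot all_order all_algebra.
From mathcomp Require Import zify ring lra.
Import Order.TTheory GRing.Theory Num.Theory.
Local Open Scope ring_scope.

Section S.
Variable Q : rat.
Hypothesis HQ : 2 <= Q.
Local Notation b := (- Q).
Local Notation f k := (b ^+ k - 1).

Lemma powQ_ge t : (1 <= t)%N -> Q <= Q ^+ t.
Proof.
have HQ' := HQ.
case: t => // t _; elim: t => [|t IH]; first by rewrite expr1.
rewrite exprS; apply: ler_peMr. all: lra.
Qed.

Lemma normb t : `|b ^+ t| = Q ^+ t.
Proof. have HQ' := HQ. by rewrite normrX normrN ger0_norm //; lra. Qed.

Lemma f_neq0 t : (1 <= t)%N -> f t != 0.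
Proof.
have HQ' := HQ.
move=> t1; apply/negP => /eqP H.
have : b ^+ t = 1 by lra.
move=> /(congr1 (fun x => `|x|)); rewrite normb normr1 => E.
have := @powQ_ge t t1; lra.
Qed.

Lemma sg_f t : (1 <= t)%N -> Num.sg (f t) = Num.sg (b ^+ t).
Proof.
have HQ' := HQ.
move=> t1; have h : 1 < `|b ^+ t| by rewrite normb; have := @powQ_ge t t1; lra.
move: h; rewrite ltr_normr => /orP [h|h].
  by rewrite !gtr0_sg //; lra.
by rewrite !ltr0_sg //; lra.
Qed.

Lemma f_incr k : (2 <= k)%N -> `|f k| < `|f k.+1|.
Proof.
have HQ' := HQ.
move=> k2.
have h1 : `|f k| <= Q ^+ k + 1.
  by apply: le_trans (ler_normB _ _) _; rewrite normb normr1.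
have h2 : Q ^+ k.+1 - 1 <= `|f k.+1|.
  by apply: le_trans _ (lerB_dist _ _); rewrite normb normr1.
have h3 : Q ^+ 2 <= Q ^+ k.
  by rewrite ler_eXn2l //; lra.
rewrite exprS in h2; rewrite expr2 in h3; nra.
Qed.

Lemma gbin_split m l :
  gbin b m l = (\prod_(1 <= t < l.+1) f (m - t + 1)) / \prod_(1 <= t < l.+1) f t.
Proof. have HQ' := HQ. by rewrite /gbin big_split /= -prodfV. Qed.

Lemma prod_f_neq0 l : \prod_(1 <= t < l.+1) f t != 0.
Proof.
have HQ' := HQ.
rewrite prodf_seq_neq0; apply/allP => t; rewrite mem_index_iota => /andP[t1 _].
exact: (@f_neq0 t).
Qed.

Lemma gbin_nn l : gbin b l l = 1.
Proof.
have HQ' := HQ.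
rewrite gbin_split big_nat_rev /=.
rewrite (eq_big_nat _ _ (F2 := fun t => f t)); first by rewrite divff // prod_f_neq0.
move=> i /andP[i1 i2]; congr (_ ^+ _ - 1); lia.
Qed.

Lemma tele l : (\prod_(1 <= t < l.+1) f t.+1) * f 1 = (\prod_(1 <= t < l.+1) f t) * f l.+1.
Proof.
have HQ' := HQ.
elim: l => [|l IH]; first by rewrite !big_geq.
rewrite big_nat_recr //= [in RHS]big_nat_recr //=.
by rewrite mulrAC IH mulrAC.
Qed.

Lemma gbin_n1n l : gbin b l.+1 l = f l.+1 / f 1.
Proof.
have HQ' := HQ.
rewrite gbin_split big_nat_rev /=.
rewrite (eq_big_nat _ _ (F2 := fun t => f t.+1)); last first.
  move=> i /andP[i1 i2]; congr (_ ^+ _ - 1); lia.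
have h1 := @f_neq0 1 (leqnn 1); have h2 := prod_f_neq0 l.
apply: (mulIf h1); rewrite mulrAC tele mulrAC divff // mul1r divfK //.
Qed.

Lemma gbin_1 m : (1 <= m)%N -> gbin b m 1 = f m / f 1.
Proof. have HQ' := HQ. move=> m1; rewrite /gbin big_nat1; congr ((_ ^+ _ - 1) / _); lia. Qed.

Lemma gbin_0 m : gbin b m 0 = 1.
Proof. have HQ' := HQ. by rewrite /gbin big_geq. Qed.
End S.

Lemma Qclosed (q d i : nat) : 2 <= (q%:R : rat) -> (1 <= i <= d)%N ->
  Qeig q d 1 i = - ((- (q%:R : rat)) ^+ (2 * d - i) - 1) / ((- (q%:R:rat)) ^+ 1 - 1).
Proof.
move=> HQ /andP[i1 id].
have [n dn] : exists n, d = n.+1 by exists d.-1; lia.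
rewrite /Qeig.
case: (ltnP i d) => [lt|ge].
- have -> : minn 1 (d - i) = 1%N by lia.
  rewrite big_nat_recr // big_nat1 /Tterm /=.
  have -> : (d - 0 = n.+1)%N by lia.
  have -> : (d - 1 = n)%N by lia.
  rewrite gbin_n1n // gbin_nn // gbin_0 // gbin_1 //; last by lia.
  have -> : ('C(1 - 0, 2) + 0 * d = 0)%N by [].
  have -> : ('C(1 - 1, 2) + 1 * d = d)%N by rewrite mul1n.
  rewrite expr0.
  have -> : (2 * d - i = d + (d - i))%N by lia.
  rewrite exprD dn.
  have h1 := @f_neq0 _ HQ 1 (leqnn 1).
  field; done.
- have -> : minn 1 (d - i) = 0%N by lia.
  have ei : i = d by lia.
  subst i.
  rewrite big_nat1 /Tterm /=.
  have -> : (d - 0 = n.+1)%N by lia.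
  have -> : (d - 1 = n)%N by lia.
  have -> : (d - d = 0)%N by lia.
  rewrite gbin_n1n // gbin_0 //.
  have -> : ('C(1 - 0, 2) + 0 * d = 0)%N by [].
  rewrite expr0.
  have -> : (2 * d - d = n.+1)%N by lia.
  have h1 := @f_neq0 _ HQ 1 (leqnn 1).
  field; done.
Qed.
Lemma Q_ge2 q : prime_power q -> 2 <= (q%:R : rat).
Proof.
move=> [p [k [pp k0 ->]]].
rewrite (ler_nat _ 2).
apply: leq_trans (prime_gt1 pp) _.
by rewrite -{1}(expn1 p) leq_pexp2l // prime_gt0.
Qed.

Theorem lemma5p1 (q d : nat) :
  prime_power q -> (6 <= d)%N ->
  (forall i : nat, (1 <= i <= d - 1)%N ->
     `|Qeig q d 1 (i + 1)| < `|Qeig q d 1 i|) /\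
  (forall i : nat, (1 <= i <= d)%N ->
     Num.sg (Qeig q d 1 i) = Num.sg (Tterm q d (minn 1 (d - i)) i 1)).
Proof.
move=> pq d6; have HQ := @Q_ge2 q pq.
have h1 := @f_neq0 _ HQ 1 (leqnn 1).
split.
- move=> i /andP[i1 id].
  rewrite !Qclosed //; last 2 first.
    by apply/andP; split; lia.
    by apply/andP; split; lia.
  have -> : (2 * d - i = (2 * d - (i + 1)).+1)%N by lia.
  rewrite !normrM !normrN !normfV ltr_pM2r; last by rewrite invr_gt0 normr_gt0.
  apply: f_incr => //; lia.
- move=> i /andP[i1 id].
  case: (ltnP i d) => [lt|ge]; last first.
    have ei : i = d by lia.
    subst i; rewrite /Qeig subnn /=; by rewrite big_nat1.
  have -> : minn 1 (d - i) = 1%N by lia.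
  rewrite Qclosed //; last by apply/andP; split; lia.
  have [n dn] : exists n, d = n.+1 by exists d.-1; lia.
  have -> : Tterm q d 1 i 1 = - ((- (q%:R : rat)) ^+ d * ((- (q%:R : rat)) ^+ (d - i) - 1))
        / ((- (q%:R:rat)) ^+ 1 - 1).
    rewrite /Tterm /=.
    have -> : ('C(1 - 1, 2) + 1 * d = d)%N by rewrite mul1n.
    have -> : (d - 1 = n)%N by lia.
    rewrite gbin_nn // gbin_1 //; last by lia.
    field; done.
  rewrite !mulNr !sgrN !sgrM !sg_f //; try lia.
  have -> : (2 * d - i = d + (d - i))%N by lia.
  by rewrite exprD sgrM.
Qed.
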